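(* Let $X$ be a nonempty compact metric space. Any two complete tree systems of peripheral extensions of $X$ are isomorphic.
   Context: A peripheral extension of $X$ is a compact metric space $\ddot X$ containing a countably infinite discrete open dense subset $P$ (the peripheral points) with $\ddot X\setminus P$ homeomorphic to $X$. Let $T$ be the countable tree in which every vertex has infinite valence, $V_T$ its vertex set, and $N_t$ the set of oriented edges of $T$ with initial vertex $t$. A complete tree system of peripheral extensions of $X$ is a tuple $\Theta=(\{X_t\},\{b_t\})$ where for each $t\in V_T$, $X_t$ is a space homeomorphic to $X$ equipped with a peripheral extension $\ddot X_t$ with peripheral set $P_t$, and $b_t:N_t\to P_t$ is a bijection. An isomorphism $\Theta\to\Theta'=(\{X'_t\},\{b'_t\})$ is a tuple $(\lambda,\{f_t\})$ where $\lambda:T\to T$ is a tree automorphism, each $f_t:\ddot X_t\to\ddot X'_{\lambda(t)}$ is a homeomorphism mapping $X_t$ onto $X'_{\lambda(t)}$, and $b'_{\lambda(t)}(\lambda(e))=f_t(b_t(e))$ for all $t\in V_T$, $e\in N_t$. *)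

(* Defs.v *)
From HB Require Import structures.
From mathcomp Require Import all_boot all_order all_algebra.
From mathcomp Require Import all_classical all_reals all_analysis.

Set Implicit Arguments.
Unset Strict Implicit.
Unset Printing Implicit Defensive.

Import numFieldNormedType.Exports.
Local Open Scope classical_set_scope.

Definition homeomorphism (A B : topologicalType) (f : A -> B) : Prop :=
  exists g : B -> A, cancel f g /\ cancel g f /\ continuous f /\ continuous g.

(** [g : X -> Y] is a homeomorphism of [X] onto the subspace [S] of [Y]
    (subspace topology written out: open sets of [S] are [V `&` S], [V] open). *)
Definition homeo_onto (X Y : topologicalType) (g : X -> Y) (S : set Y) : Prop :=
  injective g /\ range g = S /\ continuous g /\
  (forall U : set X, open U -> exists V : set Y, open V /\ g @` U = V `&` S).

Definition peripheral_extension (R : realType) (X Y : pseudoMetricType R)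
    (P : set Y) (e : X -> Y) : Prop :=
  [/\ hausdorff_space Y /\ compact [set: Y],
      countable P /\ infinite_set P,
      (forall p, P p -> exists U : set Y, open U /\ U `&` P = [set p]),
      open P /\ closure P = [set: Y]
    & homeo_onto e (~` P)].

Fixpoint is_walk (V : Type) (adj : V -> V -> Prop) (x : V) (s : seq V) : Prop :=
  match s with
  | [::] => True
  | y :: s' => adj x y /\ is_walk adj y s'
  end.

Definition reduced_walk (V : Type) (x : V) (s : seq V) : Prop :=
  forall i, (i + 2 <= size s)%N -> nth x (x :: s) i <> nth x (x :: s) (i + 2).

Definition is_tree (V : Type) (adj : V -> V -> Prop) : Prop :=
  [/\ (forall x y, adj x y -> adj y x),
      (forall x, ~ adj x x),
      (forall x y, exists s, is_walk adj x s /\ last x s = y)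
    & (forall x s, is_walk adj x s -> (0 < size s)%N -> last x s = x ->
         ~ reduced_walk x s)].

Definition countable_tree_infinite_valence (V : Type) (adj : V -> V -> Prop)
  : Prop :=
  [/\ is_tree adj, inhabited V, countable [set: V]
    & forall t, infinite_set [set s | adj t s]].

(** For each vertex [t], [Xdd t] is the peripheral extension
    with peripheral set [Per t]; the space [X_t] is [Xdd t \ Per t],
    homeomorphic to [X] via [emb t].  The oriented edge [(t, s)] (with
    [adj t s]) is sent to [bmap t s], and [s |-> bmap t s] is a bijection
    from the neighbours of [t] (= oriented edges with initial vertex [t])
    onto [Per t]. *)
Unset Implicit Arguments.
Record tree_system (R : realType) (X : pseudoMetricType R) (V : Type)
    (adj : V -> V -> Prop) := TreeSystem {
  Xdd : V -> pseudoMetricType R;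
  Per : forall t, set (Xdd t);
  emb : forall t, X -> Xdd t;
  bmap : forall t, V -> Xdd t;
  ts_periph : forall t : V, peripheral_extension (Per t) (emb t);
  ts_bmap_in : forall t s, adj t s -> Per t (bmap t s);
  ts_bmap_inj : forall t s s', adj t s -> adj t s' ->
                  bmap t s = bmap t s' -> s = s';
  ts_bmap_surj : forall t p, Per t p -> exists2 s, adj t s & bmap t s = p
}.
Set Implicit Arguments.
Arguments tree_system {R} X {V} adj.
Arguments Xdd {R X V adj}.
Arguments Per {R X V adj}.
Arguments emb {R X V adj}.
Arguments bmap {R X V adj}.

Definition ts_isomorphic (R : realType) (X : pseudoMetricType R) (V : Type)
    (adj : V -> V -> Prop) (Th Th' : tree_system X adj) : Prop :=
  exists lam : V -> V,
    bijective lam /\ (forall x y, adj x y <-> adj (lam x) (lam y)) /\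
    exists f : forall t, Xdd Th t -> Xdd Th' (lam t),
      forall t,
        [/\ homeomorphism (f t),
            f t @` (~` Per Th t) = ~` Per Th' (lam t)
          & forall s, adj t s -> bmap Th' (lam t) (lam s) = f t (bmap Th t s)].

(* Main.v *)
Require Import Defs.
From HB Require Import structures.
From mathcomp Require Import all_boot all_order all_algebra.
From mathcomp Require Import all_classical all_reals all_analysis.
From mathcomp Require Import zify.
Set Implicit Arguments.
Unset Strict Implicit.
Unset Printing Implicit Defensive.
Import Order.TTheory GRing.Theory Num.Theory.
Import numFieldNormedType.Exports.
Local Open Scope classical_set_scope.
Local Open Scope ring_scope.
Lemma near_notin {T : topologicalType} (hT : hausdorff_space T) (P : set T)
  (x : T) (E : seq T) : ~ P x -> nbhs x (fun y => P y -> y \notin E).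
Proof.
move=> nPx; elim: E => [|e E IH].
  by apply: filterS (@filterT _ _ _); move=> y _ _; rewrite in_nil.
have He : nbhs x (fun y => P y -> y != e).
  have [xe0|xe] := eqVneq x e.
    apply: filterS (@filterT _ _ _) => y _ Py; apply/eqP => yx; subst.
    by apply: nPx.
  have : nbhs x (~` [set e]).
    apply: open_nbhs_nbhs; split.
      by rewrite openC; apply: accessible_closed_set1; apply: hausdorff_accessible.
    by move=> /= xe'; move: xe; rewrite xe' eqxx.
  by apply: filterS => y /= ye _; apply/eqP.
apply: filterS (filterI He IH) => y [h1 h2] Py.
by rewrite in_cons negb_or h1 // h2.
Qed.
Definition pY (T : Type) (y : T) : Type := T.
HB.instance Definition _ (T : topologicalType) (y : T) := Topological.copy (pY y) T.
HB.instance Definition _ (T : topologicalType) (y : T) := isPointed.Build (pY y) y.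
Lemma compact_coverT (T : topologicalType) (y : T) (A : set T) :
  compact A -> @cover_compact (pY y) A.
Proof. by move=> cA; rewrite -compact_cover. Qed.

Lemma far_finite {R : realType} {Y : pseudoMetricType R} (y0 : Y) (P : set Y)
  (cY : compact [set: Y])
  (iso : forall p, P p -> exists U, open U /\ U `&` P = [set p]) (r : R) (r0 : 0 < r) :
  exists E : seq Y, forall p, P p -> ~ (exists k, ~ P k /\ ball k r p) ->
    p \in E.
Proof.
pose O := \bigcup_(k in ~` P) (ball k r)°.
have oO : open O by apply: bigcup_open => k _; apply: open_interior.
have cT : compact (~` O).
  by apply: (subclosed_compact _ cY) => //; apply: open_closedC.
have : forall p, exists U : set Y, P p -> open U /\ U `&` P = [set p].
  move=> p; case: (pselect (P p)) => [/iso [U hU]|nP]; first by exists U.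
  by exists setT.
move=> /choice [Uf hUf].
have [D' D'P cov] : finite_subset_cover P Uf (~` O).
  apply: (@compact_coverT _ y0 _ cT _ P Uf).
- by move=> i Pi; case: (hUf i Pi).
- move=> y Oy.
  have Py : P y.
    apply: contrapT => nPy; apply: Oy; exists y => //.
    by apply: nbhs_singleton; apply: nbhs_interior; apply: nbhsx_ballx.
  by exists y => //; case: (hUf y Py) => _ /seteqP [_ /(_ y erefl)] [].
exists (finmap.enum_fset D') => p Pp nf.
have Op : (~` O) p.
  move=> Op; apply: nf; case: Op => k nPk intp.
  by exists k; split => //; apply: interior_subset.
case: (cov p Op) => i Di Ufp.
have Pi : P i by apply/set_mem/D'P.
case: (hUf i Pi) => _ /seteqP [/(_ p (conj Ufp Pp)) /= -> _].
exact: Di.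
Qed.
Definition eps (R : realType) (n : nat) : R := n.+1%:R^-1.

Lemma eps_gt0 (R : realType) n : 0 < eps R n.
Proof. by rewrite /eps invr_gt0 ltr0n. Qed.

Lemma eps_le (R : realType) m n : (m <= n)%N -> eps R n <= eps R m.
Proof. by move=> mn; rewrite /eps lef_pV2 ?posrE ?ltr0n // ler_nat ltnS. Qed.

Lemma eps_small (R : realType) (d : R) : 0 < d ->
  exists N, forall n, (N <= n)%N -> eps R n < d.
Proof.
move=> d0; have [N _ HN] := near_infty_natSinv_lt (PosNum d0).
by exists N => n Nn; apply: HN.
Qed.

Lemma dense_pick {R : realType} {Y : pseudoMetricType R} (hY : hausdorff_space Y)
  (P : set Y) (dP : closure P = setT) (x : Y) (nPx : ~ P x) (r : R) (r0 : 0 < r)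
  (E : seq Y) : exists q, [/\ P q, q \notin E & ball x r q].
Proof.
have N : nbhs x (ball x r `&` (fun y : Y => P y -> y \notin E)).
  by apply: filterI; [apply: nbhsx_ballx|apply: near_notin].
have : closure P x by rewrite dP.
by move=> /(_ _ N) [q [Pq [bq nE]]]; exists q; split => //; apply: nE.
Qed.

Definition nearK {R : realType} {Y : pseudoMetricType R} (P : set Y) (p : Y) n :=
  exists k, ~ P k /\ ball k (eps R n) p.

Definition goodK {R : realType} {Y Y' : pseudoMetricType R} (P : set Y)
  (h : Y -> Y') (p : Y) (q : Y') n :=
  exists k, [/\ ~ P k, ball k (eps R n) p & ball (h k) (eps R n) q].

Lemma step_exists {R : realType} {Y Y' : pseudoMetricType R}
  (hY' : hausdorff_space Y') (P : set Y) (P' : set Y') (oP : open P)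
  (dP' : closure P' = setT) (h : Y -> Y') (hK : forall k, ~ P k -> ~ P' (h k))
  (k0 : Y) (nPk0 : ~ P k0) (p : Y) (Pp : P p) (E : seq Y') :
  exists q, [/\ P' q, q \notin E & forall n, nearK P p n -> goodK P h p q n].
Proof.
have [d d0 sub] : nbhs_ball p P.
  by apply/nbhs_ballP; apply: open_nbhs_nbhs; split.
have [N HN] := eps_small d0.
have bnd : forall n, nearK P p n -> (n < N)%N.
  move=> n [k [nPk bk]]; rewrite ltnNge; apply/negP => Nn.
  apply: nPk; apply: sub; apply: (@le_ball _ _ _ (eps R n)); first exact/ltW/HN.
  exact: ball_sym.
case: (pselect (exists n, nearK P p n)) => [exn|nexn]; last first.
  have [q [Pq qE _]] := dense_pick hY' dP' (hK _ nPk0) (@ltr01 R) E.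
  by exists q; split => // n nn; case: nexn; exists n.
have exb : exists n, (n < N)%N && `[< nearK P p n >].
  by case: exn => n hn; exists n; rewrite bnd //=; apply/asboolP.
have ubd : forall n, (n < N)%N && `[< nearK P p n >] -> (n <= N)%N.
  by move=> n /andP[/ltnW].
case: (ex_maxnP exb ubd) => M /andP [_ /asboolP [k [nPk bk]]] Mmax.
have [q [Pq qE bq]] := dense_pick hY' dP' (hK _ nPk) (eps_gt0 R M) E.
exists q; split => // n nn.
have nM : (n <= M)%N by apply: Mmax; rewrite bnd //=; apply/asboolP.
by exists k; split => //; apply: (le_ball (eps_le R nM)).
Qed.
Section BackForth.
Variables (Y Y' : choiceType) (P : set Y) (P' : set Y').
Variables (p0 : Y) (q0 : Y') (Pp0 : P p0) (Pq0 : P' q0).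
Variables (Fw : Y -> Y' -> Prop) (Bw : Y' -> Y -> Prop).
Hypothesis exF : forall p, P p -> forall E : seq Y', exists q, [/\ P' q, q \notin E & Fw p q].
Hypothesis exB : forall q, P' q -> forall E : seq Y, exists p, [/\ P p, p \notin E & Bw q p].
Variables (c : Y -> nat) (c' : Y' -> nat).
Hypothesis cinj : forall x y, P x -> P y -> c x = c y -> x = y.
Hypothesis c'inj : forall x y, P' x -> P' y -> c' x = c' y -> x = y.

Definition Good (pq : Y * Y') := [/\ P pq.1, P' pq.2 &
  (pq = (p0, q0) \/ Fw pq.1 pq.2 \/ Bw pq.2 pq.1)].

Definition Inv (M : seq (Y * Y')) :=
  [/\ uniq (map fst M), uniq (map snd M) & forall pq, pq \in M -> Good pq].

Definition stepF n (M : seq (Y * Y')) :=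
  if pselect (exists p, [/\ P p, c p = n & p \notin map fst M]) is left _ then
    let p := xget p0 (fun p => [/\ P p, c p = n & p \notin map fst M]) in
    (p, xget q0 (fun q => [/\ P' q, q \notin map snd M & Fw p q])) :: M
  else M.

Definition stepB n (M : seq (Y * Y')) :=
  if pselect (exists q, [/\ P' q, c' q = n & q \notin map snd M]) is left _ then
    let q := xget q0 (fun q => [/\ P' q, c' q = n & q \notin map snd M]) in
    (xget p0 (fun p => [/\ P p, p \notin map fst M & Bw q p]), q) :: M
  else M.

Fixpoint Mseq n := if n is m.+1 then stepB m (stepF m (Mseq m)) else [:: (p0, q0)].

Lemma stepF_inv n M : Inv M -> Inv (stepF n M).
Proof.
rewrite /stepF; case: (pselect (exists p, [/\ P p, c p = n & p \notin map fst M])) => // ex [u1 u2 g].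
set p := xget _ _; have [Pp _ pM] : [/\ P p, c p = n & p \notin map fst M].
  exact: (xgetPex p0 ex).
have [q [Pq qM Fpq]] := exF Pp (map snd M).
set q' := xget _ _.
have [Pq' q'M Fpq'] : [/\ P' q', q' \notin map snd M & Fw p q'].
  by apply: (xgetPex q0 (P := fun q => [/\ P' q, q \notin map snd M & Fw p q])); exists q.
split => /=; [by rewrite pM|by rewrite q'M|].
move=> pq; rewrite in_cons => /orP [/eqP ->|]; last exact: g.
by split => //; right; left.
Qed.

Lemma stepB_inv n M : Inv M -> Inv (stepB n M).
Proof.
rewrite /stepB; case: (pselect (exists q, [/\ P' q, c' q = n & q \notin map snd M])) => // ex [u1 u2 g].
set q := xget q0 (fun q => [/\ P' q, c' q = n & _]); have [Pq _ qM] : [/\ P' q, c' q = n & q \notin map snd M].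
  exact: (xgetPex q0 ex).
have [p [Pp pM Bqp]] := exB Pq (map fst M).
set p' := xget p0 _.
have [Pp' p'M Bqp'] : [/\ P p', p' \notin map fst M & Bw q p'].
  by apply: (xgetPex p0 (P := fun p => [/\ P p, p \notin map fst M & Bw q p])); exists p.
split => /=; [by rewrite p'M|by rewrite qM|].
move=> pq; rewrite in_cons => /orP [/eqP ->|]; last exact: g.
by split => //; right; right.
Qed.

Lemma Mseq_inv n : Inv (Mseq n).
Proof.
elim: n => [|n IH] /=; last by apply: stepB_inv; apply: stepF_inv.
split => //= pq; rewrite inE => /eqP ->; split => //; by left.
Qed.

Lemma stepF_sub n M : {subset M <= stepF n M}.
Proof. by rewrite /stepF; case: (pselect (exists p, [/\ P p, c p = n & p \notin map fst M])) => _ x xM //; by rewrite inE xM orbT. Qed.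

Lemma stepB_sub n M : {subset M <= stepB n M}.
Proof. by rewrite /stepB; case: (pselect (exists q, [/\ P' q, c' q = n & q \notin map snd M])) => _ x xM //; by rewrite inE xM orbT. Qed.

Lemma Mseq_mono m n : (m <= n)%N -> {subset Mseq m <= Mseq n}.
Proof.
elim: n => [|n IH]; first by rewrite leqn0 => /eqP ->.
rewrite leq_eqVlt => /orP [/eqP ->//|]; rewrite ltnS => /IH sub x /sub xM /=.
by apply: stepB_sub; apply: stepF_sub.
Qed.

Lemma uniq_fun (A B : eqType) (M : seq (A * B)) (a : A) (b b' : B) :
  uniq (map fst M) -> (a, b) \in M -> (a, b') \in M -> b = b'.
Proof.
elim: M => //= -[x y] M IH /andP [nx u]; rewrite !in_cons.
case/orP => [/eqP [e1 e2]|h1]; case/orP => [/eqP [e3 e4]|h2]; subst => //.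
- by move: nx; rewrite -[x]/((x, b').1) (map_f fst h2).
- by move: nx; rewrite -[x]/((x, b).1) (map_f fst h1).
- exact: IH.
Qed.

Lemma uniq_fun2 (A B : eqType) (M : seq (A * B)) (a a' : A) (b : B) :
  uniq (map snd M) -> (a, b) \in M -> (a', b) \in M -> a = a'.
Proof.
elim: M => //= -[x y] M IH /andP [nx u]; rewrite !in_cons.
case/orP => [/eqP [e1 e2]|h1]; case/orP => [/eqP [e3 e4]|h2]; subst => //.
- by move: nx; rewrite -[y]/((a', y).2) (map_f snd h2).
- by move: nx; rewrite -[y]/((a, y).2) (map_f snd h1).
- exact: IH.
Qed.

Lemma Mseq_dom p : P p -> exists q, (p, q) \in Mseq (c p).+1.
Proof.
move=> Pp; rewrite /=.
suff [q hq] : exists q, (p, q) \in stepF (c p) (Mseq (c p)).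
  by exists q; apply: stepB_sub.
rewrite /stepF; case: (pselect (exists p', [/\ P p', c p' = c p & p' \notin map fst (Mseq (c p))])) => [ex|nex].
  set p' := xget _ _; have [Pp' cp' _] : [/\ P p', c p' = c p & p' \notin map fst (Mseq (c p))].
    exact: (xgetPex p0 ex).
  have -> : p' = p by apply: cinj.
  by exists (xget q0 (fun q => [/\ P' q, q \notin map snd (Mseq (c p)) & Fw p q])); rewrite in_cons eqxx.
case: (boolP (p \in map fst (Mseq (c p)))) => [/mapP [[a b] ab /= pa]|pn].
  by exists b; rewrite {1}pa.
by case: nex; exists p.
Qed.

Lemma Mseq_rng q : P' q -> exists p, (p, q) \in Mseq (c' q).+1.
Proof.
move=> Pq; rewrite /= /stepB; case: (pselect (exists q', [/\ P' q', c' q' = c' q & q' \notin map snd (stepF (c' q) (Mseq (c' q)))])) => [ex|nex].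
  set q' := xget q0 (fun q0 => [/\ P' q0, c' q0 = c' q & _]); have [Pq' cq' _] : [/\ P' q', c' q' = c' q & q' \notin map snd (stepF (c' q) (Mseq (c' q)))].
    exact: (xgetPex q0 ex).
  have -> : q' = q by apply: c'inj.
  by exists (xget p0 (fun p => [/\ P p, p \notin map fst (stepF (c' q) (Mseq (c' q))) & Bw q p])); rewrite inE eqxx.
case: (boolP (q \in map snd (stepF (c' q) (Mseq (c' q))))) => [/mapP [[a b] ab /= qb]|qn].
  by exists a; rewrite [X in (a, X)]qb.
by case: nex; exists q.
Qed.

Definition sig_ p := xget q0 (fun q => exists n, (p, q) \in Mseq n).
Definition tau_ q := xget p0 (fun p => exists n, (p, q) \in Mseq n).

Lemma Mseq_join n m (a a' : Y) (b b' : Y') : (a, b) \in Mseq n -> (a', b') \in Mseq m ->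
  (a, b) \in Mseq (maxn n m) /\ (a', b') \in Mseq (maxn n m).
Proof.
move=> h1 h2; split; [apply: (Mseq_mono (leq_maxl n m) h1)|apply: (Mseq_mono (leq_maxr n m) h2)].
Qed.

Lemma sig_spec p : P p -> exists n, (p, sig_ p) \in Mseq n.
Proof.
move=> Pp; apply: (xgetPex q0 (P := fun q => exists n, (p, q) \in Mseq n)).
by have [q hq] := Mseq_dom Pp; exists q; exists (c p).+1.
Qed.

Lemma tau_spec q : P' q -> exists n, (tau_ q, q) \in Mseq n.
Proof.
move=> Pq; apply: (xgetPex p0 (P := fun p => exists n, (p, q) \in Mseq n)).
by have [p hp] := Mseq_rng Pq; exists p; exists (c' q).+1.
Qed.

Lemma pair_good n a b : (a, b) \in Mseq n -> Good (a, b).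
Proof. by case: (Mseq_inv n) => _ _; apply. Qed.

Lemma back_forth_main :
  [/\ (forall p, P p -> P' (sig_ p)), (forall q, P' q -> P (tau_ q)),
      (forall p, P p -> tau_ (sig_ p) = p), (forall q, P' q -> sig_ (tau_ q) = q) &
      sig_ p0 = q0 /\ forall p, P p -> Good (p, sig_ p)].
Proof.
have sg : forall p, P p -> Good (p, sig_ p).
  by move=> p /sig_spec [n /pair_good].
have fun1 : forall p q, (exists n, (p, q) \in Mseq n) -> sig_ p = q.
  move=> p q [n hn]; have [Pp _ _] := pair_good hn.
  have [m hm] := sig_spec Pp; have [h1 h2] := Mseq_join hm hn.
  by case: (Mseq_inv (maxn m n)) => u _ _; apply: (uniq_fun u h1 h2).
have fun2 : forall p q, (exists n, (p, q) \in Mseq n) -> tau_ q = p.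
  move=> p q [n hn]; have [_ Pq _] := pair_good hn.
  have [m hm] := tau_spec Pq; have [h1 h2] := Mseq_join hm hn.
  by case: (Mseq_inv (maxn m n)) => _ u _; apply: (uniq_fun2 u h1 h2).
split.
- by move=> p /sg [].
- by move=> q /tau_spec [n /pair_good []].
- by move=> p /sig_spec [n hn]; apply: fun2; exists n.
- by move=> q /tau_spec [n hn]; apply: fun1; exists n.
- by split; [apply: fun1; exists 0%N; rewrite inE|exact: sg].
Qed.

End BackForth.

Lemma back_forth (Y Y' : choiceType) (P : set Y) (P' : set Y')
  (cP : countable P) (cP' : countable P') (p0 : Y) (q0 : Y') (Pp0 : P p0) (Pq0 : P' q0)
  (Fw : Y -> Y' -> Prop) (Bw : Y' -> Y -> Prop)
  (exF : forall p, P p -> forall E : seq Y', exists q, [/\ P' q, q \notin E & Fw p q])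
  (exB : forall q, P' q -> forall E : seq Y, exists p, [/\ P p, p \notin E & Bw q p]) :
  exists (s : Y -> Y') (t : Y' -> Y),
  [/\ (forall p, P p -> P' (s p)), (forall q, P' q -> P (t q)),
      (forall p, P p -> t (s p) = p), (forall q, P' q -> s (t q) = q) &
      s p0 = q0 /\ forall p, P p -> p = p0 \/ Fw p (s p) \/ Bw (s p) p].
Proof.
have /countable_injP [c cinj] := cP.
have /countable_injP [c' c'inj] := cP'.
have ci : forall x y, P x -> P y -> c x = c y -> x = y.
  by move=> x y Px Py; apply: cinj; apply/mem_set.
have ci' : forall x y, P' x -> P' y -> c' x = c' y -> x = y.
  by move=> x y Px Py; apply: c'inj; apply/mem_set.
have [h1 h2 h3 h4 [h5 h6]] := back_forth_main Pp0 Pq0 exF exB ci ci'.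
exists (sig_ P P' p0 q0 Fw Bw c c'), (tau_ P P' p0 q0 Fw Bw c c'); split => //; split => // p Pp. case: (h6 p Pp) => _ _ [[-> _]|]; first by left.
by right.
Qed.
Definition glue {Y Y' : Type} (P : set Y) (s h : Y -> Y') (y : Y) : Y' :=
  if pselect (P y) is left _ then s y else h y.

Lemma glueP {Y Y' : Type} (P : set Y) (s h : Y -> Y') y : P y -> glue P s h y = s y.
Proof. by rewrite /glue; case: pselect. Qed.

Lemma glueN {Y Y' : Type} (P : set Y) (s h : Y -> Y') y : ~ P y -> glue P s h y = h y.
Proof. by rewrite /glue; case: pselect. Qed.

Lemma glue_cont {R : realType} {Y Y' : pseudoMetricType R} (hY : hausdorff_space Y)
  (P : set Y) (oP : open P)
  (iso : forall p, P p -> exists U, open U /\ U `&` P = [set p]) (h s : Y -> Y')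
  (hc : forall x, ~ P x -> forall e : R, 0 < e -> exists2 d : R, 0 < d &
          forall k, ~ P k -> ball x d k -> ball (h x) e (h k))
  (cof : forall n, exists E : seq Y, forall p, P p -> p \notin E -> goodK P h p (s p) n) :
  continuous (glue P s h).
Proof.
move=> x; apply/cvg_ballP => e e0.
case: (pselect (P x)) => [Px|nPx].
  have [U [oU UP]] := iso x Px.
  have : nbhs x (U `&` P).
    apply: open_nbhs_nbhs; split; first exact: openI.
    by rewrite UP.
  apply: filterS => y UPy; have : [set x] y by rewrite -UP.
  by move=> /= ->; apply: ballxx.
have e20 : 0 < e / 2 by rewrite divr_gt0.
have [d d0 hd] := hc x nPx _ e20.
have d20 : 0 < d / 2 by rewrite divr_gt0.
have [N1 HN1] := eps_small d20.
have [N2 HN2] := eps_small e20.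
have [E HE] := cof (maxn N1 N2).
have epsd : eps R (maxn N1 N2) < d / 2 by apply: HN1; apply: leq_maxl.
have epse : eps R (maxn N1 N2) < e / 2 by apply: HN2; apply: leq_maxr.
have : nbhs x (ball x (d / 2) `&` (fun y => P y -> y \notin E)).
  by apply: filterI; [apply: nbhsx_ballx|apply: near_notin].
apply: filterS => y [bxy yE]; rewrite (glueN _ _ nPx).
case: (pselect (P y)) => [Py|nPy]; last first.
  rewrite (glueN _ _ nPy); apply: (@le_ball _ _ _ (e / 2)); first by rewrite ler_pdivrMr // ler_pMr // ler1n.
  apply: hd => //; apply: (@le_ball _ _ _ (d / 2)) => //.
  by rewrite ler_pdivrMr // ler_pMr // ler1n.
rewrite (glueP _ _ Py).
have [k [nPk bky bhk]] := HE y Py (yE Py).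
have bxk : ball x d k.
  apply: (@le_ball _ _ _ (d / 2 + d / 2)); first by rewrite -splitr.
  apply: (ball_triangle bxy).
  by apply: (le_ball (ltW epsd)); apply: ball_sym.
apply: (@le_ball _ _ _ (e / 2 + e / 2)); first by rewrite -splitr.
apply: (ball_triangle (hd k nPk bxk)).
exact: (le_ball (ltW epse)).
Qed.
Definition finv {X Y : choiceType} (x0 : X) (e : X -> Y) (y : Y) : X :=
  xget x0 (fun x => e x = y).

Lemma finvK {X Y : choiceType} (x0 : X) (e : X -> Y) : injective e ->
  forall x, finv x0 e (e x) = x.
Proof.
move=> ei x; apply: ei; rewrite /finv.
by apply: (xgetPex x0 (P := fun z => e z = e x)); exists x.
Qed.

Lemma finvE {X Y : choiceType} (x0 : X) (e : X -> Y) y : (exists x, e x = y) ->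
  e (finv x0 e y) = y.
Proof. by move=> ex; apply: (xgetPex x0 (P := fun z => e z = y)). Qed.

Lemma comp_cont {R : realType} {X Y Y' : pseudoMetricType R} (x0 : X)
  (e : X -> Y) (e' : X -> Y') (K : set Y) (K' : set Y')
  (he : homeo_onto e K) (he' : homeo_onto e' K') :
  forall x, K x -> forall r : R, 0 < r -> exists2 d : R, 0 < d &
    forall k, K k -> ball x d k -> ball (e' (finv x0 e x)) r (e' (finv x0 e k)).
Proof.
case: he => ei [er [_ eo]]; case: he' => _ [_ [e'c _]].
move=> x Kx r r0.
have ex : exists z, e z = x by move: Kx; rewrite -er => -[z _ <-]; exists z.
have := e'c (finv x0 e x); move/cvg_ballP => /(_ r r0).
rewrite nbhsE => -[U [oU Uz] sU].
have [V [oV eU]] := eo U oU.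
have Vx : V x.
  have : (e @` U) x by exists (finv x0 e x) => //; apply: finvE.
  by rewrite eU => -[].
have : nbhs x V by apply: open_nbhs_nbhs.
move=> /nbhs_ballP [d d0 sV]; exists d => // k Kk bk.
have : (V `&` K) k by split => //; apply: sV.
rewrite -eU => -[u Uu <-]; rewrite finvK //.
exact: sU.
Qed.
Lemma periph_homeo {R : realType} {X : pseudoMetricType R} (x0 : X)
  {Y Y' : pseudoMetricType R} (P : set Y) (P' : set Y') (e : X -> Y) (e' : X -> Y')
  (hP : peripheral_extension P e) (hP' : peripheral_extension P' e')
  (p : Y) (q : Y') (Pp : P p) (Pq : P' q) :
  exists F : Y -> Y', [/\ homeomorphism F, F @` (~` P) = ~` P' & F p = q].
Proof.
case: (hP) => [[hY cY] [cP _] isoP [oP dP] he].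
case: (hP') => [[hY' cY'] [cP' _] isoP' [oP' dP'] he'].
have he2 := he; have he2' := he'.
case: he2 => ei [er _]; case: he2' => ei' [er' _].
pose h := fun y => e' (finv x0 e y).
pose g := fun y => e (finv x0 e' y).
have hK : forall k, ~ P k -> ~ P' (h k).
  by move=> k _; rewrite /h; have : (~` P') (e' (finv x0 e k)) by rewrite -er'; exists (finv x0 e k).
have gK : forall k, ~ P' k -> ~ P (g k).
  by move=> k _; rewrite /g; have : (~` P) (e (finv x0 e' k)) by rewrite -er; exists (finv x0 e' k).
have eK : forall k, ~ P k -> e (finv x0 e k) = k.
  by move=> k nk; apply: finvE; have : (~` P) k by []; rewrite -er => -[z _ <-]; exists z.
have eK' : forall k, ~ P' k -> e' (finv x0 e' k) = k.
  by move=> k nk; apply: finvE; have : (~` P') k by []; rewrite -er' => -[z _ <-]; exists z.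
have ghK : forall k, ~ P k -> g (h k) = k.
  by move=> k nk; rewrite /g /h finvK // eK.
have hgK : forall k, ~ P' k -> h (g k) = k.
  by move=> k nk; rewrite /g /h finvK // eK'.
have nP0 : ~ P (e x0) by have : (~` P) (e x0) by rewrite -er; exists x0.
have nP0' : ~ P' (e' x0) by have : (~` P') (e' x0) by rewrite -er'; exists x0.
pose Fw := fun (y : Y) (z : Y') => forall n, nearK P y n -> goodK P h y z n.
pose Bw := fun (z : Y') (y : Y) => forall n, nearK P' z n -> goodK P' g z y n.
have exF : forall y, P y -> forall E : seq Y', exists z, [/\ P' z, z \notin E & Fw y z].
  by move=> y Py E; apply: (step_exists hY' oP dP' hK nP0 Py).
have exB : forall z, P' z -> forall E : seq Y, exists y, [/\ P y, y \notin E & Bw z y].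
  by move=> z Pz E; apply: (step_exists hY oP' dP gK nP0' Pz).
have [s [t [sP tP ts st [sp sgood]]]] := back_forth cP cP' Pp Pq exF exB.
have cofs : forall n, exists E : seq Y, forall y, P y -> y \notin E -> goodK P h y (s y) n.
  move=> n.
  have [E1 HE1] := far_finite p cY isoP (eps_gt0 R n).
  have [E2 HE2] := far_finite q cY' isoP' (eps_gt0 R n).
  exists (p :: E1 ++ map t E2) => y Py; rewrite in_cons mem_cat negb_or negb_or.
  case/and3P => yp yE1 ytE2.
  case: (sgood y Py) => [yp0|[Fy|By]]; first by move: yp; rewrite yp0 eqxx.
    apply: Fy; apply: contrapT => nn; move: yE1; rewrite (HE1 y Py) //.
  have nq : nearK P' (s y) n.
    apply: contrapT => nn; move: ytE2; rewrite -(ts y Py) (map_f t (HE2 _ (sP y Py) _)) //.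
  have [k' [nk' b1 b2]] := By n nq.
  by exists (g k'); split => //; [apply: gK|rewrite hgK].
have coft : forall n, exists E : seq Y', forall z, P' z -> z \notin E -> goodK P' g z (t z) n.
  move=> n; have [E HE] := cofs n; exists (map s E) => z Pz zE.
  have tE : t z \notin E by apply: contra zE => tz; rewrite -(st z Pz) map_f.
  have [k [nk b1 b2]] := HE _ (tP z Pz) tE.
  move: b2; rewrite st // => b2.
  by exists (h k); split => //; [apply: hK|rewrite ghK].
exists (glue P s h); split.
- exists (glue P' t g); split; [|split; [|split]].
  + move=> y; case: (pselect (P y)) => [Py|nPy].
      by rewrite (glueP _ _ Py) (glueP _ _ (sP y Py)) ts.
    by rewrite (glueN _ _ nPy) (glueN _ _ (hK y nPy)) ghK.
  + move=> y; case: (pselect (P' y)) => [Py|nPy].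
      by rewrite (glueP _ _ Py) (glueP _ _ (tP y Py)) st.
    by rewrite (glueN _ _ nPy) (glueN _ _ (gK y nPy)) hgK.
  + by apply: glue_cont => //; apply: (comp_cont x0 he he').
  + by apply: glue_cont => //; apply: (comp_cont x0 he' he).
- apply/seteqP; split => [_ [y nPy <-]|k nk].
    by rewrite /= (glueN _ _ nPy); apply: hK.
  by exists (g k); [apply: gK|rewrite (glueN _ _ (gK k nk)) hgK].
- by rewrite (glueP _ _ Pp).
Qed.
Section TreeFacts.
Variables (V : Type) (adj : V -> V -> Prop).
Hypothesis tr : is_tree adj.

Definition eadj : rel V := fun u v => `[< adj u v >].

Lemma walkP x s : is_walk adj x s <-> path eadj x s.
Proof.
elim: s x => [|y s IH] x //=; split.
  by case=> a w; apply/andP; split; [apply/asboolP|apply/IH].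
by case/andP => /asboolP a /IH w.
Qed.

Definition NB (L : seq V) := forall d i, (i.+2 < size L)%N -> nth d L i <> nth d L i.+2.

Lemma redP x s : reduced_walk x s <-> NB (x :: s).
Proof.
split => [h d i hi|h i hi].
  have hi' : (i + 2 <= size s)%N by move: hi => /=; lia.
  move: (h i hi'); rewrite addn2 [nth x _ i](set_nth_default d) ?[nth x _ i.+2](set_nth_default d) //.
  by apply: ltn_trans hi.
by rewrite addn2; apply: h; rewrite /=; lia.
Qed.

Lemma NB_rev L : NB L -> NB (rev L).
Proof.
move=> h d i hi; rewrite size_rev in hi.
rewrite !nth_rev ?size_rev //; last by apply: ltn_trans hi.
have -> : (size L - i.+1 = (size L - i.+3).+2)%N by lia.
by move=> e; apply: (h d (size L - i.+3)%N); [lia|rewrite e].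
Qed.

Lemma NB_cat3 A a B : NB (rcons A a) -> NB (a :: B) ->
  (forall d, 0 < size A -> 0 < size B -> nth d A (size A).-1 <> nth d B 0)%N ->
  NB (A ++ a :: B).
Proof.
move=> h1 h2 h3 d i; rewrite size_cat /= => hi.
have E1 : forall j, (j <= size A)%N -> nth d (A ++ a :: B) j = nth d (rcons A a) j.
  by move=> j hj; rewrite nth_cat nth_rcons; case: ltngtP hj => // ->; rewrite subnn.
have E2 : forall j, (size A <= j)%N -> nth d (A ++ a :: B) j = nth d (a :: B) (j - size A).
  by move=> j hj; rewrite nth_cat ltnNge hj.
case: (leqP i.+2 (size A)) => c1.
  rewrite !E1 //; first by apply: h1; rewrite size_rcons ltnS.
  by apply: leq_trans c1; lia.
case: (leqP (size A) i) => c2.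
  rewrite !E2 //; last by lia.
  have -> : (i.+2 - size A = (i - size A).+2)%N by lia.
  by apply: h2 => /=; lia.
have iA : i = (size A).-1 by lia.
rewrite E1 ?E2; [|lia|lia].
rewrite nth_rcons ifT; last by lia.
have -> : (i.+2 - size A = 1)%N by lia.
rewrite /= iA; apply: h3; lia.
Qed.

Lemma nth_rcons_lt (L : seq V) a d j : (j < size L)%N -> nth d (rcons L a) j = nth d L j.
Proof. by move=> h; rewrite nth_rcons h. Qed.

Lemma nth_rcons_eq (L : seq V) a d : nth d (rcons L a) (size L) = a.
Proof. by rewrite nth_rcons ltnn eqxx. Qed.

Lemma NB_rcons2 L b a : NB (rcons (rcons L b) a) <->
  NB (rcons L b) /\ (forall d, 0 < size L -> nth d L (size L).-1 <> a)%N.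
Proof.
split.
  move=> h; split.
    move=> d i; rewrite size_rcons => hi.
    have := h d i; rewrite !size_rcons !(@nth_rcons_lt (rcons L b)) ?size_rcons; try lia.
    by apply; lia.
  move=> d sL; have := h d (size L).-1; rewrite !size_rcons.
  rewrite (@nth_rcons_lt (rcons L b)) ?size_rcons; last by lia.
  rewrite (@nth_rcons_lt L); last by lia.
  have -> : ((size L).-1.+2 = size (rcons L b))%N by rewrite size_rcons; lia.
  by rewrite nth_rcons_eq size_rcons; apply.
move=> [h1 h2] d i; rewrite !size_rcons => hi.
case: (ltnP i.+2 (size L).+1) => c.
  rewrite !(@nth_rcons_lt (rcons L b)) ?size_rcons; try lia.
  by apply: h1; rewrite size_rcons.
have iL : i = (size L).-1 by lia.
rewrite (@nth_rcons_lt (rcons L b)) ?size_rcons; last by lia.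
rewrite (@nth_rcons_lt L); last by lia.
have -> : (i.+2 = size (rcons L b))%N by rewrite size_rcons; lia.
rewrite nth_rcons_eq iL; apply: h2; lia.
Qed.

End TreeFacts.
Section TreeFacts2.
Variables (V : Type) (adj : V -> V -> Prop).
Hypothesis tr : is_tree adj.

Lemma nth_cons_last (x d : V) s : nth d (x :: s) (size s) = last x s.
Proof.
elim: s x => [|y s IH] x //=.
Qed.

Lemma red_rcons2 (x : V) (s : seq V) (b a : V) : reduced_walk x (rcons (rcons s b) a) <->
  reduced_walk x (rcons s b) /\ last x s <> a.
Proof.
rewrite !redP -!rcons_cons NB_rcons2; split => -[h1 h2]; split => //.
  by have := h2 x; rewrite /= nth_cons_last; apply.
by move=> d _; rewrite /= nth_cons_last.
Qed.

Lemma red_nil (x : V) : reduced_walk x [::].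
Proof. by move=> i; rewrite addn2. Qed.

Lemma red_one (x a : V) : reduced_walk x [:: a].
Proof. by move=> i /=; rewrite addn2. Qed.

Lemma red_prefix (x : V) (s : seq V) (a : V) : reduced_walk x (rcons s a) -> reduced_walk x s.
Proof.
case/lastP: s => [|s b]; first by move=> _; apply: red_nil.
by case/red_rcons2.
Qed.

Lemma walk_rcons (x : V) (s : seq V) (a : V) : is_walk adj x (rcons s a) <-> is_walk adj x s /\ adj (last x s) a.
Proof.
rewrite !walkP rcons_path; split; first by case/andP => h /asboolP.
by case=> h1 h2; apply/andP; split => //; apply/asboolP.
Qed.

Lemma no_closed (x : V) (s : seq V) : is_walk adj x s -> reduced_walk x s -> (0 < size s)%N ->
  last x s = x -> False.
Proof. by case: tr => _ _ _ nc w r s0 l; exact: (nc x s w s0 l r). Qed.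

Lemma reduce_walk (x : V) (s : seq V) : is_walk adj x s ->
  exists s', [/\ is_walk adj x s', reduced_walk x s' & last x s' = last x s].
Proof.
elim/last_ind: s => [|s0 a IH]; first by move=> _; exists [::]; split => //; apply: red_nil.
move=> /walk_rcons [w0 ad]; have [s0' [w0' r0' l0']] := IH w0.
rewrite last_rcons.
case/lastP: s0' w0' r0' l0' => [|s1 b] w0' r0' l0'.
  exists [:: a]; split => //; last by apply: red_one.
  by split => //; move: ad; rewrite -l0'.
rewrite last_rcons in l0'.
case: (pselect (last x s1 = a)) => [e|ne].
  exists s1; split => //; first by case/walk_rcons: w0'.
  exact: red_prefix r0'.
exists (rcons (rcons s1 b) a); split => //; last by rewrite last_rcons.
  by apply/walk_rcons; split => //; rewrite last_rcons l0'.
by apply/red_rcons2.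
Qed.

Lemma walk_rev (x : V) (p : seq V) : is_walk adj x p -> is_walk adj (last x p) (rev (belast x p)).
Proof.
case: tr => sym _ _ _.
rewrite !walkP rev_path => h.
suff <- : path (eadj adj) x p = path (fun z => (eadj adj)^~ z) x p by [].
apply: eq_path => u v; rewrite /eadj; apply/asboolP/asboolP; exact: sym.
Qed.

Lemma red_uniq (x : V) (w1 w2 : seq V) : is_walk adj x w1 -> reduced_walk x w1 ->
  is_walk adj x w2 -> reduced_walk x w2 -> last x w1 = last x w2 -> w1 = w2.
Proof.
elim/last_ind: w1 w2 => [|u1 a IH] w2; case/lastP: w2 => [|u2 b] //.
- move=> _ _ w2 r2; rewrite last_rcons => e; exfalso.
  by apply: (no_closed w2 r2); rewrite ?size_rcons // last_rcons.
- move=> w1 r1 _ _; rewrite last_rcons => e; exfalso.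
  by apply: (no_closed w1 r1); rewrite ?size_rcons // last_rcons.
move=> w1 r1 w2 r2; rewrite !last_rcons => ab; subst b.
case: (pselect (last x u1 = last x u2)) => [e|ne].
  rewrite (IH u2) //; [by case/walk_rcons: w1|exact: red_prefix r1|by case/walk_rcons: w2|exact: red_prefix r2].
exfalso.
pose s := u1 ++ a :: rev (x :: u2).
apply: (@no_closed x s).
- apply/walkP; rewrite cat_path; apply/andP; split.
    by move: w1 => /walkP; rewrite rcons_path => /andP [].
  rewrite /= ; apply/andP; split.
    by move: w1 => /walkP; rewrite rcons_path => /andP [].
  have := walk_rev w2; rewrite last_rcons belast_rcons => /walkP.
  by [].
- apply/redP.
  have -> : x :: s = (x :: u1) ++ a :: rev (x :: u2) by [].
  apply: NB_cat3.
  + by have := r1; rewrite redP.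
  + by rewrite -rev_rcons; apply: NB_rev; rewrite -redP.
  + move=> d _ _; rewrite /= nth_cons_last nth_rev //= subSS subn0 nth_cons_last.
    exact: ne.
- by rewrite /s size_cat addnS.
- by rewrite /s last_cat /= rev_cons last_rcons.
Qed.

End TreeFacts2.
Lemma red_cons2 (V : Type) (x y z : V) w :
  reduced_walk x [:: y, z & w] <-> x <> z /\ reduced_walk y (z :: w).
Proof.
rewrite !redP; split.
  move=> h; split; first by have := h x 0%N; apply.
  by move=> d i hi; have := h d i.+1; apply; rewrite /= ltnS.
case=> h1 h2 d [|i] hi /=; last by apply: h2; move: hi; rewrite /= ltnS.
exact: h1.
Qed.

Unset Implicit Arguments.
Section Construct.
Variables (R : realType) (X : pseudoMetricType R) (V : Type) (adj : V -> V -> Prop).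
Hypothesis tr : is_tree adj.
Variables (Th Th' : tree_system X adj) (r : V).
Variable HF : forall t t' : V, Xdd Th t -> Xdd Th' t' -> Xdd Th t -> Xdd Th' t'.
Definition HFspec t t' (F : Xdd Th t -> Xdd Th' t') :=
  homeomorphism F /\ F @` (~` Per Th t) = ~` Per Th' t'.
Hypothesis HFok : forall t t' p q, Per Th t p -> Per Th' t' q ->
  HFspec t t' (HF t t' p q) /\ HF t t' p q p = q.
Variables (pr : forall t, Xdd Th t) (pr' : forall t, Xdd Th' t).
Hypothesis prP : forall t, Per Th t (pr t).
Hypothesis prP' : forall t, Per Th' t (pr' t).

Let sym : forall x y, adj x y -> adj y x. Proof. by case: tr. Qed.

Definition nextv t t' (F : Xdd Th t -> Xdd Th' t') s : V :=
  match pselect (exists s', adj t' s' /\ bmap Th' t' s' = F (bmap Th t s)) with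
  | left e => proj1_sig (cid e) | right _ => r end.

Lemma nextvP t t' F s : (exists s', adj t' s' /\ bmap Th' t' s' = F (bmap Th t s)) ->
  adj t' (nextv t t' F s) /\ bmap Th' t' (nextv t t' F s) = F (bmap Th t s).
Proof.
rewrite /nextv; case: pselect => // e _.
exact: (proj2_sig (cid e)).
Qed.

Definition Fdat t t' (o : option (V * V)) : Xdd Th t -> Xdd Th' t' :=
  match o with None => HF t t' (pr t) (pr' t')
  | Some (u, u') => HF t t' (bmap Th t u) (bmap Th' t' u') end.

Definition step (st : option (V * V) * V * V) (s : V) : option (V * V) * V * V :=
  let: (o, t, t') := st in (Some (t, t'), s, nextv t t' (Fdat t t' o) s).

Definition run (w : seq V) := foldl step (None, r, r) w.

Lemma walkex t : exists w, [/\ is_walk adj r w, reduced_walk r w & last r w = t].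
Proof.
case: tr => _ _ conn _; have [s [ws ls]] := conn r t.
have [s' [w' r' l']] := reduce_walk ws; exists s'; split => //.
by rewrite l'.
Qed.

Definition pth t := proj1_sig (cid (walkex t)).
Definition lam t := (run (pth t)).2.
Definition ost t := (run (pth t)).1.1.
Definition ff t : Xdd Th t -> Xdd Th' (lam t) := Fdat t (lam t) (ost t).

Lemma pth_spec t : [/\ is_walk adj r (pth t), reduced_walk r (pth t) & last r (pth t) = t].
Proof. exact: (proj2_sig (cid (walkex t))). Qed.

Lemma pth_eq w : is_walk adj r w -> reduced_walk r w -> pth (last r w) = w.
Proof.
move=> ww rw; have [w1 r1 l1] := pth_spec (last r w).
exact: (red_uniq tr w1 r1 ww rw l1).
Qed.

Lemma run_cur w : (run w).1.2 = last r w.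
Proof.
elim/last_ind: w => [|w a IH] //.
by rewrite /run foldl_rcons last_rcons; case: (foldl _ _ _) => [ [ob t] u ].
Qed.

Lemma pth_r : pth r = [::].
Proof. by apply: (pth_eq [::]) => //; apply: red_nil. Qed.

Lemma lam_r : lam r = r.
Proof. by rewrite /lam pth_r. Qed.

Lemma ost_r : ost r = None.
Proof. by rewrite /ost pth_r. Qed.

Lemma child w s : is_walk adj r (rcons w s) -> reduced_walk r (rcons w s) ->
  lam s = nextv (last r w) (lam (last r w)) (ff (last r w)) s /\ ost s = Some (last r w, lam (last r w)).
Proof.
move=> ww rw.
have ps : pth s = rcons w s by rewrite -{1}(last_rcons r w s) pth_eq.
have pt : pth (last r w) = w.
  by apply: pth_eq; [case/walk_rcons: ww|exact: red_prefix rw].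
rewrite /lam /ost /ff /lam /ost ps pt /run foldl_rcons.
have := run_cur w; rewrite /run.
by case: (foldl _ _ _) => [ [ob t] u ] /= ->.
Qed.

Lemma HFspec_per t t' (F : Xdd Th t -> Xdd Th' t') : HFspec t t' F ->
  [/\ injective F, forall p, Per Th t p -> Per Th' t' (F p) &
     forall q, Per Th' t' q -> exists2 p, Per Th t p & F p = q].
Proof.
move=> [[G [FG [GF _]]] im].
have Fi : injective F by apply: (can_inj FG).
split => //.
  move=> p Pp; apply: contrapT => nP.
  have : (~` Per Th' t') (F p) by [].
  by rewrite -im => -[y ny /Fi yp]; apply: ny; rewrite yp.
move=> q Pq; exists (G q); last by rewrite GF.
apply: contrapT => nG.
have : (F @` (~` Per Th t)) q by exists (G q) => //; rewrite GF.
by rewrite im.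
Qed.

Lemma bin {T : tree_system X adj} {t s : V} : adj t s -> Per T t (bmap T t s).
Proof. exact: ts_bmap_in. Qed.
Lemma bsurj {T : tree_system X adj} {t : V} {p} : Per T t p -> exists2 s, adj t s & bmap T t s = p.
Proof. exact: ts_bmap_surj. Qed.
Lemma binj {T : tree_system X adj} {t s s' : V} : adj t s -> adj t s' -> bmap T t s = bmap T t s' -> s = s'.
Proof. exact: ts_bmap_inj. Qed.

Lemma good_walk w : is_walk adj r w -> reduced_walk r w -> HFspec (last r w) (lam (last r w)) (ff (last r w)).
Proof.
elim/last_ind: w => [|w s IH] ww rw.
  by rewrite /= /ff ost_r lam_r /=; case: (HFok _ _ _ _ (prP r) (prP' r)).
have [cs os] := child w s ww rw.
have IH' := IH (proj1 (proj1 (walk_rcons _ _ _ _) ww)) (red_prefix rw).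
move: cs os IH'; set t := last r w => cs os IH'.
have ats : adj t s by case/walk_rcons: ww.
have [_ Fper _] := HFspec_per _ _ _ IH'.
have [s' as' bs'] := bsurj (Fper _ (bin ats)).
have [adjl _] := nextvP _ _ _ _ (ex_intro _ s' (conj as' bs')).
rewrite -cs in adjl.
rewrite last_rcons /ff os /=.
by case: (HFok _ _ _ _ (bin (sym _ _ ats)) (bin (sym _ _ adjl))).
Qed.

Lemma good t : HFspec t (lam t) (ff t).
Proof.
have [w1 r1 l1] := pth_spec t.
by have := good_walk _ w1 r1; rewrite l1.
Qed.

Lemma nbr_case t s : adj t s -> pth s = rcons (pth t) s \/ pth t = rcons (pth s) t.
Proof.
move=> ats; have [w1 r1 l1] := pth_spec t.
move: w1 r1 l1; case/lastP: (pth t) => [|w b] w1 r1 l1.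
  left; rewrite /= in l1; subst t.
  have -> : s = last r [:: s] by [].
  by apply: pth_eq; [split|apply: red_one].
rewrite last_rcons in l1; subst b.
case: (pselect (last r w = s)) => [e|ne].
  right; congr rcons; rewrite -e; symmetry; apply: pth_eq.
    by case/walk_rcons: w1.
  exact: red_prefix r1.
left; rewrite -{1}(last_rcons r (rcons w t) s); apply: pth_eq.
  by apply/walk_rcons; rewrite last_rcons.
by apply/red_rcons2.
Qed.

Lemma compat t s : adj t s -> adj (lam t) (lam s) /\ bmap Th' (lam t) (lam s) = ff t (bmap Th t s).
Proof.
move=> ats; have [w1 r1 l1] := pth_spec t; have [w2 r2 l2] := pth_spec s.
case: (nbr_case t s ats) => e.
  rewrite e in w2 r2; have [cs _] := child _ _ w2 r2; rewrite l1 in cs; rewrite cs.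
  apply: nextvP; have [_ Fper _] := HFspec_per _ _ _ (good t).
  have [s' as' bs'] := bsurj (Fper _ (bin ats)).
  by exists s'.
rewrite e in w1 r1; have [cs os] := child _ _ w1 r1; rewrite l2 in cs os.
have adjl : adj (lam s) (lam t).
  have [_ Fper _] := HFspec_per _ _ _ (good s).
  have [s' as' bs'] := bsurj (Fper _ (bin (sym _ _ ats))).
  by rewrite cs; case: (nextvP _ _ _ _ (ex_intro _ s' (conj as' bs'))).
split; first exact: sym.
rewrite /ff os /=.
by case: (HFok _ _ _ _ (bin ats) (bin (sym _ _ adjl))).
Qed.

Lemma nbr_inj t s1 s2 : adj t s1 -> adj t s2 -> lam s1 = lam s2 -> s1 = s2.
Proof.
move=> a1 a2 e; have [_ c1] := compat _ _ a1; have [_ c2] := compat _ _ a2.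
have [fi _ _] := HFspec_per _ _ _ (good t).
apply: (binj (T := Th) a1 a2); apply: fi; by rewrite -c1 -c2 e.
Qed.

Lemma nbr_surj t u : adj (lam t) u -> exists2 s, adj t s & lam s = u.
Proof.
move=> au; have [_ _ Fs] := HFspec_per _ _ _ (good t).
have [p Pp fp] := Fs _ (bin au).
have [s ats bs] := bsurj Pp.
exists s => //; have [a2 c2] := compat _ _ ats.
by apply: (binj (T := Th') a2 au); rewrite c2 bs fp.
Qed.

Lemma lam_surj u : exists t, lam t = u.
Proof.
case: tr => _ _ conn _; have [w [ww <-]] := conn r u.
elim/last_ind: w ww => [|w a IH] ww; first by exists r; rewrite lam_r.
case/walk_rcons: ww => ww aw; have [t tl] := IH ww.
rewrite -tl in aw; have [s _ ls] := nbr_surj _ _ aw.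
by exists s; rewrite last_rcons.
Qed.

Lemma walk_map x w : is_walk adj x w -> is_walk adj (lam x) (map lam w).
Proof.
elim: w x => [|y w IH] x //= [axy wy]; split; last exact: IH.
by case: (compat _ _ axy).
Qed.

Lemma red_map x w : is_walk adj x w -> reduced_walk x w -> reduced_walk (lam x) (map lam w).
Proof.
elim: w x => [|y w IH] x; first by move=> _ _; apply: red_nil.
case: w IH => [|z w] IH; first by move=> _ _; apply: red_one.
move=> [axy [ayz wz]] /red_cons2 [xz rz] /=; apply/red_cons2; split.
  by move=> e; apply: xz; apply: (nbr_inj y _ _ (sym _ _ axy) ayz e).
by apply: (IH y) => //; split.
Qed.

Lemma map_lam_inj x w1 w2 : is_walk adj x w1 -> is_walk adj x w2 -> map lam w1 = map lam w2 -> w1 = w2.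
Proof.
elim: w1 x w2 => [|y w1 IH] x [|z w2] //= [a1 w1'] [a2 w2'] [e1 e2].
have yz := nbr_inj x y z a1 a2 e1; subst z; congr cons; exact: (IH y).
Qed.

Lemma lam_inj t1 t2 : lam t1 = lam t2 -> t1 = t2.
Proof.
move=> e; have [w1 r1 l1] := pth_spec t1; have [w2 r2 l2] := pth_spec t2.
have m1 := walk_map _ _ w1; have m2 := walk_map _ _ w2.
have n1 := red_map _ _ w1 r1; have n2 := red_map _ _ w2 r2.
rewrite lam_r in m1 m2 n1 n2.
have E : forall w, last r (map lam w) = lam (last r w) by move=> w; rewrite -{1}lam_r last_map.
have := red_uniq tr m1 n1 m2 n2; rewrite !E l1 l2 e => /(_ erefl).
by move=> /(map_lam_inj _ _ _ w1 w2) pe; rewrite -l1 -l2 pe.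
Qed.

Lemma adj_back x y : adj (lam x) (lam y) -> adj x y.
Proof. by move=> a; have [s axs ls] := nbr_surj _ _ a; rewrite -(lam_inj _ _ ls). Qed.

Lemma construct_iso : ts_isomorphic Th Th'.
Proof.
exists lam; split.
  have surj := lam_surj.
  exists (fun u => proj1_sig (cid (surj u))).
    by move=> t; apply: lam_inj; exact: (proj2_sig (cid (surj (lam t)))).
  by move=> u; exact: (proj2_sig (cid (surj u))).
split; first by move=> x y; split; [move=> a; case: (compat _ _ a)|apply: adj_back].
exists ff => t; have [h1 h2] := good t; split => // s ats.
by case: (compat _ _ ats).
Qed.

End Construct.
Set Implicit Arguments.

Theorem lemma1p2 (R : realType) (X : pseudoMetricType R)
    (hX : hausdorff_space X) (cX : compact [set: X]) (neX : [set: X] !=set0)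
    (V : Type) (adj : V -> V -> Prop)
    (hT : countable_tree_infinite_valence adj)
    (Th Th' : tree_system X adj) :
  ts_isomorphic Th Th'.
Proof.
case: hT => tr [r] _ _.
have [x0 _] := cid neX.
have HFex : forall t t' (p : Xdd Th t) (q : Xdd Th' t'),
    exists F : Xdd Th t -> Xdd Th' t', Per Th t p -> Per Th' t' q ->
      HFspec R X V adj Th Th' t t' F /\ F p = q.
  move=> t t' p q; case: (pselect (Per Th t p /\ Per Th' t' q)) => [[Pp Pq]|nP].
    have [F [h1 h2 h3]] := periph_homeo x0 (ts_periph _ _ _ _ Th t) (ts_periph _ _ _ _ Th' t') Pp Pq.
    by exists F.
  by exists (fun _ => q) => Pp Pq; case: nP.
pose HF t t' p q := proj1_sig (cid (HFex t t' p q)).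
have HFok : forall t t' p q, Per Th t p -> Per Th' t' q ->
    HFspec R X V adj Th Th' t t' (HF t t' p q) /\ HF t t' p q p = q.
  by move=> t t' p q; exact: (proj2_sig (cid (HFex t t' p q))).
have prex : forall (T : tree_system X adj) t, exists p, Per T t p.
  move=> T t; have [_ [_ inf] _ _ _] := ts_periph _ _ _ _ T t.
  exact: (infinite_setN0 inf).
pose pr t := proj1_sig (cid (prex Th t)).
pose pr' t := proj1_sig (cid (prex Th' t)).
have H1 := construct_iso _ _ _ _ tr Th Th' r HF HFok.
exact: (H1 pr pr' (fun t => proj2_sig (cid (prex Th t))) (fun t => proj2_sig (cid (prex Th' t)))).
Qed.
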